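(* Let $p\ge 7$ be a prime and $k$ an integer with $(p+1)/2\le k\le p-3$. Then $\mathsf{BO}(k,\mathbb{Z}/p\mathbb{Z})=k+1$.
   Context: For a positive integer $k$, a set $\{g_1,\dots,g_k\}$ of $k$ distinct elements of a finite abelian group $G$ (written additively) is called $k$-barycentric if $\sum_{i=1}^k g_i = k\,g_j$ for some $1\le j\le k$. The $k$-th barycentric Olson constant $\mathsf{BO}(k,G)$ is the smallest integer $\ell$ such that every subset $A\subseteq G$ with $|A|\ge \ell$ contains a $k$-barycentric subset (so that always $\mathsf{BO}(k,G)\le |G|+1$). *)

(* Defs.v *)
From HB Require Import structures.
From mathcomp Require Import all_boot all_order all_algebra.
Set Implicit Arguments. Unset Strict Implicit. Unset Printing Implicit Defensive.
Import GRing.Theory.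
Local Open Scope ring_scope.

Definition barycentric (G : finZmodType) (k : nat) (S : {set G}) : bool :=
  (#|S| == k)%N && [exists j in S, \sum_(g in S) g == j *+ k].

Definition BO_bound (G : finZmodType) (k : nat) (ell : nat) : bool :=
  [forall A : {set G}, (ell <= #|A|)%N ==>
     [exists S : {set G}, (S \subset A) && barycentric k S]].

Lemma BO_bound_exists (G : finZmodType) (k : nat) : exists ell, BO_bound G k ell.
Proof.
exists #|G|.+1; apply/forallP => A; apply/implyP => H.
by move: (max_card A); rewrite leqNgt H.
Qed.

Definition BO (k : nat) (G : finZmodType) : nat := ex_minn (BO_bound_exists G k).

(* Main.v *)
Require Import Defs.
From mathcomp Require Import all_boot all_order all_algebra.
From mathcomp Require Import zify.
Import GRing.Theory.
Local Open Scope ring_scope.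

Lemma sub_card (T : finType) n : forall d (A : {set T}), #|A| = (n + d)%N ->
  exists2 B : {set T}, B \subset A & #|B| = n.
Proof.
elim=> [|d IH] A hA.
  by exists A; [exact: subxx | rewrite hA addn0].
have : (0 < #|A|)%N by rewrite hA addnS.
case/card_gt0P => x xA.
have [|B sB cB] := IH (A :\ x).
  by move: hA; rewrite (cardsD1 x A) xA; lia.
exists B => //; exact: subset_trans sB (subD1set A x).
Qed.

Lemma card_Zp_type p : (1 < p)%N -> #|'Z_p| = p.
Proof. by move=> h; rewrite card_ord Zp_cast. Qed.

Lemma mulrn_injZp p (hp : prime p) n (hn0 : (0 < n)%N) (hn : (n < p)%N) (a b : 'Z_p) :
  a *+ n = b *+ n -> a = b.
Proof.
have p1 : (1 < p)%N by exact: prime_gt1.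
have U : (n%:R : 'Z_p) \is a GRing.unit.
  by rewrite (unitZpE n p1) (prime_coprime _ hp) (gtnNdvd hn0 hn).
move=> E; apply: (mulIr U); rewrite /= !mulr_natr; exact: E.
Qed.

Lemma pZp p (hp : prime p) (b : 'Z_p) : b *+ p = 0%R.
Proof. by rewrite -mulr_natr (pchar_Zp (prime_gt1 hp)) mulr0. Qed.

Lemma sum_Zp0 p (hp : prime p) (hodd : odd p) : (\sum_(x : 'Z_p) x = 0)%R.
Proof.
set S := (\sum_(x : 'Z_p) x)%R.
have hS : S = (- S)%R.
  by rewrite /S {1}(reindex_inj (@oppr_inj _)) /= sumrN.
have h2 : (S *+ 2 = 0)%R by rewrite mulr2n {1}hS addNr.
have E : p = (2 * p./2 + 1)%N by rewrite -{1}(odd_double_half p) hodd -mul2n addnC.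
have : S *+ (2 * p./2 + 1)%N = 0 by rewrite -E pZp.
by rewrite mulrnDr mulrnA h2 mul0rn add0r.
Qed.

Lemma sum_id n : ((\sum_(i < n) (i : nat)).*2 = n * n.-1)%N.
Proof.
elim: n => [|n IH]; first by rewrite big_ord0.
rewrite big_ord_recr /= doubleD IH; case: n {IH} => [|n]; rewrite /=; lia.
Qed.


Lemma upper p k (hp : prime p) (h2k : (p <= k.*2)%N) (hk : (k.+1 < p)%N)
  (hk0 : (0 < k)%N) (A : {set 'Z_p}) :
  #|A| = k.+1 -> exists S : {set 'Z_p}, (S \subset A) && barycentric k S.
Proof.
move=> cA.
have p1 : (1 < p)%N := prime_gt1 hp.
have hkp : (k < p)%N := ltnW hk.
set s := \sum_(x in A) x.
pose f := fun b : 'Z_p => s - b *+ k.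
have finj : injective f.
  move=> a b; rewrite /f => E; apply: (@mulrn_injZp p hp k hk0 hkp).
  exact: oppr_inj (addrI _ E).

pose D := f @: A.
have cD : #|D| = k.+1 by rewrite card_imset.
have cI : (1 < #|A :&: D|)%N.
  have := cardsU A D; have := max_card (A :|: D).
  have := subset_leq_card (subsetIl A D).
  rewrite card_Zp_type // cA cD; lia.
have key : exists a b, [/\ a \in A, b \in A, a != b & a = f b].
  case/card_gt1P: cI => x [y [xI yI xy]].
  move: xI yI; rewrite !inE => /andP[xA /imsetP[bx bxA ex]] /andP[yA /imsetP[bY bYA ey]].
  case: (eqVneq x bx) => [exb|nx]; last by exists x, bx.
  case: (eqVneq y bY) => [eyb|ny]; last by exists y, bY.
  exfalso; move/eqP: xy; apply.
  apply: (@mulrn_injZp p hp k.+1) => //.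
  rewrite -exb in ex; rewrite -eyb in ey.
  have hx : x + x *+ k = s by rewrite {1}ex /f subrK.
  have hy : y + y *+ k = s by rewrite {1}ey /f subrK.
  by rewrite !mulrS hx hy.
case: key => a [b [aA bA ab eab]].
exists (A :\ a); rewrite subD1set /barycentric /=.
have c1 : #|A :\ a| = k by move: (cardsD1 a A); rewrite aA cA; lia.
rewrite c1 eqxx /=; apply/existsP; exists b.
rewrite !inE eq_sym ab bA /=.
have e2 := eab; rewrite /f /s (big_setD1 a aA) /= in e2.
by move/eqP: e2; rewrite eq_sym subr_eq (inj_eq (addrI a)).
Qed.

Lemma Bgen p m (p1 : (1 < p)%N) (f : nat -> nat)
  (fl : forall i, (i < m)%N -> (f i < p)%N)
  (finj : forall i j, (i < m)%N -> (j < m)%N -> f i = f j -> i = j)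
  (i0 : nat) (i0m : (i0 < m)%N) (hs : (\sum_(i < m) f i = m * f i0)%N) :
  exists B : {set 'Z_p}, #|B| = m /\ exists2 b, b \in B & \sum_(x in B) x = b *+ m.
Proof.
pose g := fun i : 'I_m => ((f i)%:R : 'Z_p).
have ginj : injective g.
  move=> i j; rewrite /g => /(congr1 (@nat_of_ord _)).
  rewrite !(val_Zp_nat p1) !modn_small ?fl ?ltn_ord //.
  by move=> h; apply: val_inj; apply: finj => //; apply: ltn_ord.
exists (g @: setT); split.
  by rewrite card_imset // cardsT card_ord.
exists (g (Ordinal i0m)); first by apply: imset_f; rewrite inE.
rewrite big_imset /=; last by move=> i j _ _; apply: ginj.
have -> : \sum_(i in [set: 'I_m]) g i = \sum_(i < m) g i by apply: eq_bigl => i; rewrite inE.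
by rewrite /g -natr_sum hs /= natrM mulr_natl.
Qed.

Lemma Bexists p m (hp : prime p) (m3 : (3 <= m)%N) (hm : (2 * m < p)%N) :
  exists B : {set 'Z_p}, #|B| = m /\ exists2 b, b \in B & \sum_(x in B) x = b *+ m.
Proof.
have p1 := prime_gt1 hp.
have [r [Hm|Hm]] : exists r, m = (2 * r + 1)%N \/ m = (2 * r + 2)%N.
  exists (m.-1./2); have := odd_double_half m.-1; rewrite -mul2n; case: (odd m.-1) => /=; lia.
- apply: (@Bgen p m p1 id _ _ r); rewrite ?Hm //=; try lia.
  have := sum_id (2 * r + 1); rewrite -mul2n addn1 /=; nia.
- apply: (@Bgen p m p1 (fun i => if (i < (2 * r + 1))%N then i else r * 3 + 2)%N _ _ r.+1).
  + move=> i; case: ifP; lia.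
  + move=> i j; case: ifP; case: ifP; lia.
  + lia.
  + rewrite Hm (_ : (2 * r + 2 = (2 * r + 1).+1)%N); last by lia.
    rewrite big_ord_recr /=.
    have -> : (\sum_(i < (2 * r + 1)) (if (widen_ord (leqnSn _) i < (2 * r + 1))%N then
       (widen_ord (leqnSn _) i : nat) else r * 3 + 2) = \sum_(i < (2 * r + 1)) (i : nat))%N.
      by apply: eq_bigr => i _ /=; rewrite ltn_ord.
    have := sum_id (2 * r + 1); rewrite ltnn -mul2n ifT; last by lia.
    rewrite addn1 /=; nia.
Qed.

Lemma lower p k (hp : prime p) (hodd : odd p) (hk0 : (0 < k)%N) (hk : (k < p)%N)
  (m3 : (3 <= p - k)%N) (h2 : (2 * (p - k) < p)%N) :
  exists A : {set 'Z_p}, #|A| = k /\ forall j, j \in A -> \sum_(g in A) g != j *+ k.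
Proof.
have p1 := prime_gt1 hp.
have [B [cB [b bB sB]]] := @Bexists p (p - k) hp m3 h2.
exists (~: B); split.
  by have := cardsC B; rewrite (@card_Zp_type p p1) cB; lia.
move=> j; rewrite inE => jB; apply/eqP => E.
have tot := @sum_Zp0 p hp hodd.
have hC : \sum_(g in ~: B) g = \sum_(i | i \notin B) i.
  by apply: eq_bigl => i; rewrite inE.
have hs : \sum_(g in ~: B) g = - (b *+ (p - k)).
  apply/eqP; rewrite hC -sB -addr_eq0 addrC.
  apply/eqP; rewrite -[in RHS]tot [in RHS](bigID (fun x => x \in B)) /=.
  reflexivity.
have hb : - (b *+ (p - k)) = b *+ k.
  apply/eqP; rewrite eq_sym -addr_eq0 -mulrnDr subnKC; last exact: ltnW.
  by rewrite pZp.
have : b = j.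
  apply: (@mulrn_injZp p hp k hk0 hk).
  by rewrite -hb -hs E.
by move=> ebj; move: jB; rewrite -ebj bB.
Qed.

Local Close Scope ring_scope.

Theorem mainTheorem6 (p k : nat) (hp : prime p) (hp7 : (7 <= p)%N)
  (hk1 : ((p + 1) %/ 2 <= k)%N) (hk2 : (k <= p - 3)%N) :
  BO k 'Z_p = k.+1.
Proof.
have hodd : odd p.
  by case: (even_prime hp) => // e; move: hp7; rewrite e.
have E : p = (2 * p./2 + 1)%N by rewrite -{1}(odd_double_half p) hodd -mul2n addnC.
have hk' : (p + 1 <= 2 * k)%N.
  move: hk1; rewrite {1 2}E. have -> : (2 * p./2 + 1 + 1 = (p./2).+1 * 2)%N by lia.
  rewrite mulnK //; lia.
rewrite /BO; case: ex_minnP => n Hn Hmin.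
apply/eqP; rewrite eqn_leq; apply/andP; split.
  apply: Hmin; apply/forallP => A; apply/implyP => hA.
  have [A' sA' cA'] := @sub_card _ k.+1 (#|A| - k.+1) A ltac:(lia).
  have [S /andP[sS bS]] := @upper p k hp ltac:(lia) ltac:(lia) ltac:(lia) A' cA'.
  apply/existsP; exists S; rewrite bS andbT.
  exact: subset_trans sS sA'.
rewrite ltnNge; apply/negP => hn.
have [A [cA hA]] := @lower p k hp hodd ltac:(lia) ltac:(lia) ltac:(lia) ltac:(lia).
move/forallP: Hn => /(_ A); rewrite cA hn /=.
case/existsP => S /andP[sSA /andP[cS /existsP[j /andP[jS /eqP sj]]]].
have SA : S = A by apply/eqP; rewrite eqEcard sSA cA (eqP cS) leqnn.
have := hA j; rewrite -SA => /(_ jS); by rewrite sj eqxx.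
Qed.
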